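(* If a simplicial complex $\mathcal{C}$ is nuclear, then its Alexander dual $\mathcal{C}^*$ is nuclear.
   Context: A simplicial complex on a finite ground set $V$ is a family of subsets of $V$ closed under subsets (the void complex $\{\}$ and $\{\emptyset\}$ allowed); facets are inclusion-maximal faces; complexes are considered up to isomorphism (bijection of ground sets carrying faces to faces). Alexander dual: $\mathcal{C}^*=\{S\subseteq V: V\setminus S\notin\mathcal{C}\}$ on $V$. $\Delta_k$ ($k\ge0$): complex on a $(k+1)$-set with that set as only facet; $\Delta_{-1}=\{\emptyset\}$, $\Delta_{-2}=\{\}$ on the empty set. $\sqcup$: disjoint union. $D_{m,n}=(\Delta_m\sqcup\Delta_n)^*$. $\operatorname{cone}^p(\mathcal{D})$: add $p$ new vertices $u_1,\dots,u_p$, facets $F\cup\{u_1,\dots,u_p\}$ ($\operatorname{cone}^0(\mathcal{D})=\mathcal{D}$). $G(\mathcal{D})$: $\mathcal{D}$ with one new ground-set element lying in no face. For $\mathcal{D}$ on $[n]$, $\Lambda(\mathcal{D})$ is the complex on $[n+1]$ with facets $[n]$ and $F\cup\{n+1\}$, $F$ a facet of $\mathcal{D}$. A complex is nuclear if it is (isomorphic to) one of: $\Lambda(\mathcal{D})$ with $\mathcal{D}$ nuclear; $G(\mathcal{D})$ with $\mathcal{D}$ nuclear; $\operatorname{cone}^p(\Delta_m\sqcup\Delta_n)$, $p,m,n\ge0$; $\operatorname{cone}^p(D_{m,n})$, $p\ge0$, $m,n\ge1$; $\Delta_k$, $k\ge-2$. *)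

(* Defs.v *)
From mathcomp Require Import all_boot fingroup perm.
Set Implicit Arguments. Unset Strict Implicit. Unset Printing Implicit Defensive.

(* A simplicial complex on 'I_n: a family of subsets closed under subsets
   (void complex set0 and [set set0] allowed). *)
Definition is_complex n (C : {set {set 'I_n}}) : Prop :=
  forall S T : {set 'I_n}, T \subset S -> S \in C -> T \in C.

(* Isomorphism: a bijection of ground sets carrying faces exactly to faces.
   (Bijections between finite ground sets force equal sizes, so a permutation.) *)
Definition iso n (C D : {set {set 'I_n}}) : Prop :=
  exists s : {perm 'I_n}, forall S : {set 'I_n}, (S \in C) = (s @: S \in D).

Definition dual n (C : {set {set 'I_n}}) : {set {set 'I_n}} :=
  [set S | ~: S \notin C].

(* The simplex on all of 'I_n: Delta_{n-1}; n = 0 gives Delta_{-1} = {emptyset}. *)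
Definition simplex n : {set {set 'I_n}} := [set: {set 'I_n}].

Definition restr n (S : {set 'I_n.+1}) : {set 'I_n} :=
  [set i : 'I_n | widen_ord (leqnSn n) i \in S].

(* G(D): new vertex n (= ord_max) lying in no face. *)
Definition Gc n (D : {set {set 'I_n}}) : {set {set 'I_n.+1}} :=
  [set S : {set 'I_n.+1} | (ord_max \notin S) && (restr S \in D)].

(* Lambda(D): facets [n] and F + {n}, F a facet of D. *)
Definition Lambda n (D : {set {set 'I_n}}) : {set {set 'I_n.+1}} :=
  [set S : {set 'I_n.+1} | (ord_max \notin S) || (restr S \in D)].

(* cone^p(D): new vertices are the first p elements of 'I_(p + k). *)
Definition cone p k (D : {set {set 'I_k}}) : {set {set 'I_(p + k)}} :=
  [set S : {set 'I_(p + k)} | [set i : 'I_k | rshift p i \in S] \in D].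

(* Disjoint union: C1 on the first a vertices, C2 on the last b vertices. *)
Definition dunion a b (C1 : {set {set 'I_a}}) (C2 : {set {set 'I_b}})
  : {set {set 'I_(a + b)}} :=
  [set S : {set 'I_(a + b)} | ((S \subset [set lshift b i | i : 'I_a]) &&
             ([set i : 'I_a | lshift b i \in S] \in C1))
        || ((S \subset [set rshift a i | i : 'I_b]) &&
             ([set i : 'I_b | rshift a i \in S] \in C2))].

(* D_{m,n} = (Delta_m disjoint-union Delta_n)^* *)
Definition Dmn m n : {set {set 'I_(m.+1 + n.+1)}} :=
  dual (dunion (simplex m.+1) (simplex n.+1)).

Inductive nuclear : forall n, {set {set 'I_n}} -> Prop :=
| nuc_iso n (C D : {set {set 'I_n}}) : nuclear C -> iso C D -> nuclear D
| nuc_Lambda n (D : {set {set 'I_n}}) : nuclear D -> nuclear (Lambda D)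
| nuc_G n (D : {set {set 'I_n}}) : nuclear D -> nuclear (Gc D)
| nuc_cone_dunion p m n : nuclear (cone p (dunion (simplex m.+1) (simplex n.+1)))
| nuc_cone_D p m n : 1 <= m -> 1 <= n -> nuclear (cone p (Dmn m n))
| nuc_simplex n : nuclear (simplex n)
| nuc_void : nuclear (set0 : {set {set 'I_0}}).

(* Main.v *)
Require Import Defs.
From mathcomp Require Import all_boot fingroup perm.
Set Implicit Arguments. Unset Strict Implicit. Unset Printing Implicit Defensive.
Local Open Scope group_scope.

Lemma dualK n (C : {set {set 'I_n}}) : dual (dual C) = C.
Proof. by apply/setP => S; rewrite !inE setCK negbK. Qed.

Lemma mem_permE n (s : {perm 'I_n}) (A : {set 'I_n}) x :
  (x \in s @: A) = (s^-1 x \in A).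
Proof. by rewrite -{1}(permKV s x) mem_imset //; exact: perm_inj. Qed.

Lemma imsetC_perm n (s : {perm 'I_n}) (A : {set 'I_n}) :
  s @: (~: A) = ~: (s @: A).
Proof. by apply/setP => x; rewrite inE !mem_permE inE. Qed.

Lemma imsetK_perm n (s : {perm 'I_n}) (A : {set 'I_n}) :
  s @: (s^-1 @: A) = A.
Proof. by apply/setP => x; rewrite !mem_permE invgK permKV. Qed.

Lemma subset_perm n (s : {perm 'I_n}) (A B : {set 'I_n}) :
  (s @: A \subset s @: B) = (A \subset B).
Proof.
apply/subsetP/subsetP => H x.
  by move=> xA; have := H (s x); rewrite !mem_permE permK; apply.
by rewrite !mem_permE; apply: H.
Qed.

Lemma iso_dual n (C D : {set {set 'I_n}}) : iso C D -> iso (dual C) (dual D).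
Proof. by case=> s H; exists s => S; rewrite !inE H imsetC_perm. Qed.

Lemma restrC n (S : {set 'I_n.+1}) : restr (~: S) = ~: restr S.
Proof. by apply/setP => i; rewrite !inE. Qed.

Lemma dual_Lambda n (D : {set {set 'I_n}}) : dual (Lambda D) = Gc (dual D).
Proof. by apply/setP => S; rewrite !inE restrC negb_or negbK. Qed.

Lemma dual_Gc n (D : {set {set 'I_n}}) : dual (Gc D) = Lambda (dual D).
Proof. by apply/setP => S; rewrite !inE restrC negb_and negbK. Qed.

Lemma dual_cone p k (D : {set {set 'I_k}}) : dual (cone p D) = cone p (dual D).
Proof.
apply/setP => S; rewrite !inE; congr (~~ (_ \in D)).
by apply/setP => i; rewrite !inE.
Qed.

Lemma dual_simplex n : dual (simplex n) = set0.
Proof. by apply/setP => S; rewrite !inE. Qed.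

Lemma dual_void : dual (set0 : {set {set 'I_0}}) = simplex 0.
Proof. by apply/setP => S; rewrite !inE. Qed.

Lemma nuclear_set0 n : nuclear (set0 : {set {set 'I_n}}).
Proof.
elim: n => [|n IH]; first exact: nuc_void.
have -> : set0 = Gc (set0 : {set {set 'I_n}}).
  by apply/setP => S; rewrite !inE andbF.
exact: nuc_G.
Qed.

Lemma ordS_cases n (x : 'I_n.+1) : x != ord_max ->
  exists i : 'I_n, x = widen_ord (leqnSn n) i.
Proof.
move=> h; have hx : x < n.
  rewrite ltn_neqAle -ltnS ltn_ord andbT; apply: contra h => /eqP e.
  by apply/eqP/val_inj.
by exists (Ordinal hx); apply: val_inj.
Qed.

Lemma subset_restr n (B S : {set 'I_n.+1}) :
  (B \subset S) = ((ord_max \in B) ==> (ord_max \in S)) && (restr B \subset restr S).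
Proof.
apply/subsetP/andP.
  move=> H; split; first by apply/implyP; apply: H.
  by apply/subsetP => i; rewrite !inE; apply: H.
case=> /implyP H1 /subsetP H2 x xB.
case: (eqVneq x ord_max) => [e|hx]; first by rewrite e; apply: H1; rewrite -e.
case: (ordS_cases hx) => i e; subst x.
by have := H2 i; rewrite !inE; apply.
Qed.

Definition Ycx n (B : {set 'I_n}) := [set S : {set 'I_n} | ~~ (B \subset S)].

Lemma iso_Y' n (s : {perm 'I_n}) (B : {set 'I_n}) : iso (Ycx (s @: B)) (Ycx B).
Proof.
exists s^-1 => S; by rewrite !inE -[B \subset _](subset_perm s) imsetK_perm.
Qed.

Lemma nucY n (B : {set 'I_n}) : B != set0 -> nuclear (Ycx B).
Proof.
elim: n B => [|n IH] B hB; first by case/set0Pn: hB => -[].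
case/set0Pn: hB => b bB.
pose s := tperm b ord_max.
apply: (nuc_iso (C := Ycx (s @: B))); last exact: iso_Y'.
have mB2 : ord_max \in s @: B.
  by apply/imsetP; exists b => //; rewrite /s tpermL.
case: (eqVneq (restr (s @: B)) set0) => h.
  have -> : Ycx (s @: B) = Gc (simplex n).
    by apply/setP => S; rewrite !inE subset_restr mB2 /= h sub0set !andbT.
  exact/nuc_G/nuc_simplex.
have -> : Ycx (s @: B) = Lambda (Ycx (restr (s @: B))).
  by apply/setP => S; rewrite !inE subset_restr mB2 /= negb_and.
by apply/nuc_Lambda/IH.
Qed.

Lemma nucX n (a : 'I_n) (B : {set 'I_n}) : a \notin B -> B != set0 ->
  nuclear [set S : {set 'I_n} | (a \notin S) && ~~ (B \subset S)].
Proof.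
case: n a B => [[]//|n] a B aB hB.
pose s := tperm a ord_max.
apply: (nuc_iso (C := [set S : {set 'I_n.+1} | (ord_max \notin S) && ~~ (s @: B \subset S)])).
  have nB2 : ord_max \notin s @: B.
    by rewrite mem_permE /s tpermV tpermR.
  have -> : [set S : {set 'I_n.+1} | (ord_max \notin S) && ~~ (s @: B \subset S)]
           = Gc (Ycx (restr (s @: B))).
    by apply/setP => S; rewrite !inE subset_restr (negbTE nB2).
  apply/nuc_G/nucY.
  case/set0Pn: hB => b bB.
  have hb : s b != ord_max.
    apply/eqP => e; move: aB.
    have -> : a = b by apply: (@perm_inj _ s); rewrite e /s tpermL.
    by rewrite bB.
  case: (ordS_cases hb) => i e.
  by apply/set0Pn; exists i; rewrite inE -e mem_imset //; exact: perm_inj.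
exists s^-1 => S; rewrite !inE mem_permE invgK /s tpermL -/s.
by rewrite -(subset_perm s) imsetK_perm.
Qed.

Lemma lr_img m n (x : 'I_(m + n)) :
  (x \in [set lshift n i | i : 'I_m]) = (x \notin [set rshift m j | j : 'I_n]).
Proof.
case: (splitP x) => [i e|j e]; [have -> : x = lshift n i by apply: val_inj | have -> : x = rshift m j by apply: val_inj].
  rewrite mem_imset; last exact: lshift_inj.
  by apply/esym/negP => /imsetP [j _ /eqP]; rewrite eq_lrshift.
rewrite mem_imset ?negbK; last exact: rshift_inj.
by apply/negP => /imsetP [j' _ /eqP]; rewrite eq_rlshift.
Qed.

Lemma compl_sub_l m n (T : {set 'I_(m + n)}) :
  (~: T \subset [set lshift n i | i : 'I_m]) = ([set rshift m j | j : 'I_n] \subset T).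
Proof.
apply/subsetP/subsetP => H x.
  move=> xR; apply/negPn/negP => xT.
  by have := H x; rewrite inE xT lr_img xR => /(_ isT).
rewrite inE lr_img => xT; apply/negP => xR.
by move: xT; rewrite H.
Qed.

Lemma compl_sub_r m n (T : {set 'I_(m + n)}) :
  (~: T \subset [set rshift m j | j : 'I_n]) = ([set lshift n i | i : 'I_m] \subset T).
Proof.
apply/subsetP/subsetP => H x.
  move=> xL; apply/negPn/negP => xT.
  by have := H x; move: xL; rewrite inE xT lr_img => /negbTE -> /(_ isT).
rewrite inE => xT; rewrite -[x \in _]negbK -lr_img; apply/negP => xL.
by move: xT; rewrite H.
Qed.

Lemma sub_img_pre (a b : nat) (f : 'I_a -> 'I_b) (c : nat) (g : 'I_c -> 'I_a)
    (S : {set 'I_b}) :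
  ([set g j | j : 'I_c] \subset [set i | f i \in S]) = ([set f (g j) | j : 'I_c] \subset S).
Proof.
apply/subsetP/subsetP => H x.
  case/imsetP => j _ ->.
  have : g j \in [set g j | j : 'I_c] by apply/imsetP; exists j.
  by move/H; rewrite inE.
case/imsetP => j _ ->; rewrite inE; apply: H.
by apply/imsetP; exists j.
Qed.

Lemma memK p m n (S : {set 'I_(p + (m.+1 + n.+1))}) :
  (S \in cone p (Dmn m n)) =
  ~~ ([set rshift p (lshift n.+1 i) | i : 'I_m.+1] \subset S) &&
  ~~ ([set rshift p (rshift m.+1 j) | j : 'I_n.+1] \subset S).
Proof.
rewrite /cone /Dmn /dual /dunion /simplex.
rewrite !inE !andbT negb_or compl_sub_l compl_sub_r !sub_img_pre.
by rewrite andbC.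
Qed.

Lemma img1 (T : finType) (f : 'I_1 -> T) : [set f i | i : 'I_1] = [set f ord0].
Proof.
apply/setP => x; apply/imsetP/set1P => [[i _ ->]|->]; first by rewrite ord1.
by exists ord0.
Qed.

Theorem proposition6p2 (n : nat) (C : {set {set 'I_n}}) :
  is_complex C -> nuclear C -> nuclear (dual C).
Proof.
move=> _ H; elim: H => {n C}.
- move=> n C D _ IH isoCD; apply: nuc_iso IH _; exact: iso_dual.
- by move=> n D _ IH; rewrite dual_Lambda; apply: nuc_G.
- by move=> n D _ IH; rewrite dual_Gc; apply: nuc_Lambda.
- move=> p m n; rewrite dual_cone; change (nuclear (cone p (Dmn m n))).
  case: m => [|m].
    have -> : cone p (Dmn 0 n) =
      [set S : {set _} | (rshift p (lshift n.+1 (@ord0 0)) \notin S) &&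
               ~~ ([set rshift p (rshift 1 j) | j : 'I_n.+1] \subset S)].
      apply/setP => S; rewrite memK inE.
      by rewrite (img1 (fun i => rshift p (lshift n.+1 i))) sub1set.
    apply: nucX.
      by apply/imsetP => -[j _ /rshift_inj /eqP]; rewrite eq_lrshift.
    by apply/set0Pn; exists (rshift p (rshift 1 (@ord0 n))); apply/imsetP; exists ord0.
  case: n => [|n]; last by apply: nuc_cone_D.
  have -> : cone p (Dmn m.+1 0) =
    [set S : {set _} | (rshift p (rshift m.+2 (@ord0 0)) \notin S) &&
             ~~ ([set rshift p (lshift 1 i) | i : 'I_m.+2] \subset S)].
    apply/setP => S; rewrite memK inE andbC.
    by rewrite (img1 (fun i => rshift p (rshift m.+2 i))) sub1set.
  apply: nucX.
    by apply/imsetP => -[j _ /rshift_inj /eqP]; rewrite eq_rlshift.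
  by apply/set0Pn; exists (rshift p (lshift 1 (@ord0 m.+1))); apply/imsetP; exists ord0.
- move=> p m n _ _; rewrite dual_cone /Dmn dualK; exact: nuc_cone_dunion.
- by move=> n; rewrite dual_simplex; apply: nuclear_set0.
- by rewrite dual_void; apply: nuc_simplex.
Qed.
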